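(* In the two-component BKP hierarchy, for any polynomial $A=A(L,\hat L^{-1},M,\hat M)$ in the Lax operators and Orlov–Schulman operators one has, for every odd $k\ge1$, $$\frac{\partial A}{\partial t_k}=[(L^k)_+,A],\qquad \frac{\partial A}{\partial \hat t_k}=[-(\hat L^k)_-,A].$$
   Context: Let $D=d/dx$; pseudo-differential operators $\sum_{i\in\mathbb Z}f_iD^i$ are multiplied using $D^i f=\sum_{r\ge0}\binom{i}{r}D^r(f)D^{i-r}$; for $A=\sum_i f_iD^i$, $A_+=\sum_{i\ge0}f_iD^i$, $A_-=\sum_{i<0}f_iD^i$, $A^*=\sum_i(-D)^i f_i$. The two-component BKP hierarchy: dressing operators $\Phi=1+\sum_{i\ge1}a_iD^{-i}$, $\hat\Phi=1+\sum_{i\ge1}b_iD^{i}$ with coefficients depending on $t=(t_1,t_3,\dots)$, $\hat t=(\hat t_1,\hat t_3,\dots)$, $t_1=x$, satisfying $\Phi^*=D\Phi^{-1}D^{-1}$, $\hat\Phi^*=D\hat\Phi^{-1}D^{-1}$; Lax operators $L=\Phi D\Phi^{-1}$, $\hat L=\hat\Phi D^{-1}\hat\Phi^{-1}$; flows for odd $k\ge1$: $\partial_{t_k}\Phi=-(L^k)_-\Phi$, $\partial_{t_k}\hat\Phi=((L^k)_+-\delta_{k1}\hat L^{-1})\hat\Phi$, $\partial_{\hat t_k}\Phi=-(\hat L^k)_-\Phi$, $\partial_{\hat t_k}\hat\Phi=(\hat L^k)_+\hat\Phi$. Orlov–Schulman operators: $M=\Phi\Gamma\Phi^{-1}$, $\hat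 M=\hat\Phi\hat\Gamma\hat\Phi^{-1}$, $\Gamma=\sum_{k\ \mathrm{odd}}kt_kD^{k-1}$, $\hat\Gamma=x+\sum_{k\ \mathrm{odd}}k\hat t_kD^{-k-1}$. *)

(* Defs.v *)
From HB Require Import structures.
From mathcomp Require Import all_boot all_order all_algebra.
Set Implicit Arguments. Unset Strict Implicit. Unset Printing Implicit Defensive.
Import GRing.Theory.
Local Open Scope ring_scope.

(* An algebra A (over the constant field K) of pseudo-differential operators
   sum_i f_i D^i whose coefficients f_i lie in a commutative ring F of
   functions of x = t_1, t_3, t_5, ..., hat t_1, hat t_3, ...
   Index convention: the time t_(2n+1) is indexed by n : nat (so n = 0 is x). *)
Record psido_alg (K : fieldType) (A : unitAlgType K) (F : comNzRingType) :=
  PsiDOAlg {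
  Dop : A;                                   (* D = d/dx *)
  Dop_unit : Dop \is a GRing.unit;
  coef : {rmorphism F -> A};                 (* f |-> multiplication operator f *)
  coef_inj : injective coef;
  (* derivatives of functions: dtF n = d/dt_(2n+1), dthF n = d/d hat t_(2n+1) *)
  dtF : nat -> F -> F;
  dthF : nat -> F -> F;
  dtF_add : forall n f g, dtF n (f + g) = dtF n f + dtF n g;
  dtF_mul : forall n f g, dtF n (f * g) = dtF n f * g + f * dtF n g;
  dthF_add : forall n f g, dthF n (f + g) = dthF n f + dthF n g;
  dthF_mul : forall n f g, dthF n (f * g) = dthF n f * g + f * dthF n g;
  (* coefficientwise derivatives of operators *)
  dt : nat -> A -> A;
  dth : nat -> A -> A;
  dt_add : forall n a b, dt n (a + b) = dt n a + dt n b;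
  dt_scale : forall n (c : K) a, dt n (c *: a) = c *: dt n a;
  dt_mul : forall n a b, dt n (a * b) = dt n a * b + a * dt n b;
  dt_D : forall n, dt n Dop = 0;
  dt_coef : forall n f, dt n (coef f) = coef (dtF n f);
  dth_add : forall n a b, dth n (a + b) = dth n a + dth n b;
  dth_scale : forall n (c : K) a, dth n (c *: a) = c *: dth n a;
  dth_mul : forall n a b, dth n (a * b) = dth n a * b + a * dth n b;
  dth_D : forall n, dth n Dop = 0;
  dth_coef : forall n f, dth n (coef f) = coef (dthF n f);
  D_comm : forall a, Dop * a - a * Dop = dt 0 a;
  pd_plus : A -> A;
  pd_minus : A -> A;
  pd_plus_add : forall a b, pd_plus (a + b) = pd_plus a + pd_plus b;
  pd_plus_scale : forall (c : K) a, pd_plus (c *: a) = c *: pd_plus a;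
  pd_plus_minus : forall a, pd_plus a + pd_minus a = a;
  pd_plus_idem : forall a, pd_plus (pd_plus a) = pd_plus a;
  pd_plus_Dpos : forall m, pd_plus (Dop ^+ m) = Dop ^+ m;
  pd_plus_Dneg : forall m, pd_plus (Dop ^- m.+1) = 0;
  pd_plus_coefl : forall f a, pd_plus (coef f * a) = coef f * pd_plus a;
  adj : A -> A;
  adj_add : forall a b, adj (a + b) = adj a + adj b;
  adj_scale : forall (c : K) a, adj (c *: a) = c *: adj a;
  adj_mul : forall a b, adj (a * b) = adj b * adj a;
  adj_coef : forall f, adj (coef f) = coef f;
  adj_D : adj Dop = - Dop
}.

Section Lax.
Variables (K : fieldType) (A : unitAlgType K) (F : comNzRingType).
Variable P : psido_alg A F.
Variables (Phi Phih Gam Gamh : A).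

Local Notation D := (Dop P).

Definition laxL : A := Phi * D * Phi^-1.
Definition laxLh : A := Phih * D^-1 * Phih^-1.
Definition osM : A := Phi * Gam * Phi^-1.
Definition osMh : A := Phih * Gamh * Phih^-1.

Definition is_Gamma : Prop :=
  (forall n, dt P n Gam = (2 * n + 1)%:R * D ^+ (2 * n)) /\
  (forall n, dth P n Gam = 0).

(* hat Gamma = x + sum_(k odd) k hat t_k D^(-k-1). *)
Definition is_Gammah : Prop :=
  (forall n, dt P n Gamh = (if n == 0%N then 1 else 0)) /\
  (forall n, dth P n Gamh = (2 * n + 1)%:R * D ^- (2 * n + 2)).

Definition two_comp_BKP : Prop :=
  [/\ Phi \is a GRing.unit /\ Phih \is a GRing.unit,
      (* Phi = 1 + sum_(i>=1) a_i D^(-i),  hat Phi = 1 + sum_(i>=1) b_i D^i *)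
      pd_plus P Phi = 1 /\ pd_minus P (Phih * D^-1) = D^-1,
      adj P Phi = D * Phi^-1 * D^-1 /\ adj P Phih = D * Phih^-1 * D^-1 &
      forall n : nat,
        [/\ dt P n Phi = - pd_minus P (laxL ^+ (2 * n + 1)) * Phi,
            dt P n Phih = (pd_plus P (laxL ^+ (2 * n + 1))
                           - (if n == 0%N then laxLh^-1 else 0)) * Phih,
            dth P n Phi = - pd_minus P (laxLh ^+ (2 * n + 1)) * Phi &
            dth P n Phih = pd_plus P (laxLh ^+ (2 * n + 1)) * Phih]].

End Lax.

Inductive lax_var := VL | VLhinv | VM | VMh.

Inductive ncpoly (K : Type) :=
| NCconst of K
| NCvar of lax_var
| NCadd of ncpoly K & ncpoly K
| NCmul of ncpoly K & ncpoly K.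

Fixpoint nceval (K : fieldType) (A : unitAlgType K) (vL vLhinv vM vMh : A)
  (p : ncpoly K) : A :=
  match p with
  | NCconst c => c%:A
  | NCvar VL => vL
  | NCvar VLhinv => vLhinv
  | NCvar VM => vM
  | NCvar VMh => vMh
  | NCadd p q => nceval vL vLhinv vM vMh p + nceval vL vLhinv vM vMh q
  | NCmul p q => nceval vL vLhinv vM vMh p * nceval vL vLhinv vM vMh q
  end.

Definition opcomm (R : nzRingType) (a b : R) := a * b - b * a.

(* Main.v *)
Require Import Defs.
From mathcomp Require Import all_boot all_order all_algebra.
Import GRing.Theory.
Local Open Scope ring_scope.

Section Gen.
Variable R : unitRingType.

Lemma opcommDl (a b x : R) : opcomm (a + b) x = opcomm a x + opcomm b x.
Proof. by rewrite /opcomm mulrDl mulrDr opprD addrACA. Qed.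

Lemma opcommNl (a x : R) : opcomm (- a) x = - opcomm a x.
Proof. by rewrite /opcomm mulNr mulrN opprB opprK addrC. Qed.

Lemma opcommMr (a x y : R) : opcomm a (x * y) = opcomm a x * y + x * opcomm a y.
Proof.
rewrite /opcomm mulrBl mulrBr !mulrA addrA; congr (_ + _).
by rewrite addrNK.
Qed.

Lemma opcomm_c (a x : R) : GRing.comm a x -> opcomm a x = 0.
Proof. by move=> h; rewrite /opcomm h subrr. Qed.

Lemma opcommDc (a b x : R) : GRing.comm a x -> opcomm (a + b) x = opcomm b x.
Proof. by move=> h; rewrite opcommDl opcomm_c // add0r. Qed.

Lemma conj_opcomm (u a b : R) : u \is a GRing.unit ->
  opcomm (u * a * u^-1) (u * b * u^-1) = u * opcomm a b * u^-1.
Proof.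
move=> hu; rewrite /opcomm mulrBr mulrBl.
by rewrite !mulrA -[u * a * u^-1 * u]mulrA mulVr // mulr1
   -[u * b * u^-1 * u]mulrA mulVr // mulr1.
Qed.

Lemma conjX (u a : R) (m : nat) : u \is a GRing.unit ->
  (u * a * u^-1) ^+ m = u * a ^+ m * u^-1.
Proof.
move=> hu; elim: m => [|m IH]; first by rewrite !expr0 mulr1 mulrV.
by rewrite exprS IH exprS !mulrA -[u * a * u^-1 * u]mulrA mulVr // mulr1 ?mulrA.

Qed.

Lemma comm_pow (X G Y : R) : opcomm X G = Y -> GRing.comm X Y ->
  forall m, opcomm (X ^+ m.+1) G = m.+1%:R * (X ^+ m * Y).
Proof.
move=> hXG hc; elim=> [|m IH]; first by rewrite expr1 expr0 mul1r mul1r.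
rewrite [X ^+ m.+2]exprS.
have -> : forall Z, opcomm (X * Z) G = X * opcomm Z G + opcomm X G * Z.
  move=> Z; rewrite /opcomm mulrBr mulrBl !mulrA addrA addrNK.
  by rewrite -!mulrA.
rewrite IH hXG mulrA (commr_nat X m.+1) -mulrA [X * (_ * Y)]mulrA -exprS.
have -> : Y * X ^+ m.+1 = X ^+ m.+1 * Y := commrX m.+1 (commr_sym hc).
by rewrite -[in RHS]natr1 mulrDl mul1r.
Qed.

Section Der.
Variable d : R -> R.
Hypothesis dadd : forall a b, d (a + b) = d a + d b.
Hypothesis dmul : forall a b, d (a * b) = d a * b + a * d b.

Lemma d0 : d 0 = 0.
Proof. have h := dadd 0 0; rewrite addr0 in h. by apply: (addrI (d 0)); rewrite -h addr0. Qed.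

Lemma d1 : d 1 = 0.
Proof.
have h := dmul 1 1; rewrite mul1r mulr1 mul1r in h.
by apply: (addrI (d 1)); rewrite -h addr0.
Qed.

Lemma dV u : u \is a GRing.unit -> d (u^-1) = - (u^-1 * d u * u^-1).
Proof.
move=> hu; have h := dmul u u^-1; rewrite mulrV // d1 in h.
have : u^-1 * (d u * u^-1 + u * d u^-1) = 0 by rewrite -h mulr0.
rewrite mulrDr mulKr // mulrA addrC => /eqP; rewrite addr_eq0 => /eqP ->.
by [].
Qed.

Lemma dconj u x : u \is a GRing.unit ->
  d (u * x * u^-1) = opcomm (d u * u^-1) (u * x * u^-1) + u * d x * u^-1.
Proof.
move=> hu; rewrite !dmul dV // /opcomm.
by rewrite !mulrA mulrDl mulrN !mulrA divrK // addrAC.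
Qed.
End Der.
End Gen.

Lemma opcomm0l (R : unitRingType) (x : R) : opcomm 0 x = 0.
Proof. by rewrite /opcomm mul0r mulr0 subrr. Qed.

Lemma opcommV (R : unitRingType) (X G : R) : X \is a GRing.unit ->
  opcomm X G = 1 -> opcomm X^-1 G = - (X^-1 * X^-1).
Proof.
move=> hX h.
have e : X^-1 * opcomm X G * X^-1 = G * X^-1 - X^-1 * G.
  by rewrite /opcomm mulrBr mulKr // mulrBl mulrA mulrK.
by rewrite h mulr1 in e; rewrite e opprB.
Qed.

Lemma nc_der (K : fieldType) (A : unitAlgType K) (d : A -> A) (B vL vLi vM vMh : A) :
  (forall a b, d (a + b) = d a + d b) ->
  (forall a b, d (a * b) = d a * b + a * d b) ->
  (forall (c : K) a, d (c *: a) = c *: d a) ->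
  d vL = opcomm B vL -> d vLi = opcomm B vLi -> d vM = opcomm B vM -> d vMh = opcomm B vMh ->
  forall p, d (nceval vL vLi vM vMh p) = opcomm B (nceval vL vLi vM vMh p).
Proof.
move=> dadd dmul dsc h1 h2 h3 h4; elim=> [c|[]|p IHp q IHq|p IHp q IHq] //=.
- rewrite dsc d1 // scaler0 opcomm_c //.
  by rewrite /GRing.comm -scalerAl -scalerAr mulr1 mul1r.
- by rewrite dadd IHp IHq /opcomm mulrDl mulrDr opprD addrACA.
- by rewrite dmul IHp IHq opcommMr.
Qed.

Theorem proposition3p2 (K : fieldType) (A : unitAlgType K) (F : comNzRingType)
  (P : psido_alg A F) (Phi Phih Gam Gamh : A) :
  two_comp_BKP P Phi Phih ->
  is_Gamma P Gam -> is_Gammah P Gamh ->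
  forall (p : ncpoly K) (n : nat),
    let X := nceval (laxL P Phi) (laxLh P Phih)^-1
                    (osM Phi Gam) (osMh Phih Gamh) p in
    dt P n X = opcomm (pd_plus P (laxL P Phi ^+ (2 * n + 1))) X /\
    dth P n X = opcomm (- pd_minus P (laxLh P Phih ^+ (2 * n + 1))) X.
Proof.
move=> [[uPhi uPhih] _ _ flows] [hGt hGth] [hGht hGhth] p n X; rewrite /X.
have uD := Dop_unit P.
set L := laxL P Phi; set Lh := laxLh P Phih.
have hLhi : Lh^-1 = Phih * (Dop P) * Phih^-1.
  rewrite /Lh /laxLh.
  rewrite (invrM (x := Phih / Dop P)) ?unitrV ?unitrMl ?unitrV //.
  rewrite (@invrM _ Phih (Dop P)^-1) ?unitrV // !invrK.
  by rewrite mulrA.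
have hD : opcomm (Dop P) Gam = 1 by rewrite /opcomm D_comm hGt mul1r expr0.
have hDh : opcomm (Dop P) Gamh = 1 by rewrite /opcomm D_comm hGht.
have [fPhi fPhih fhPhi fhPhih] := flows n.
set k := (2 * n + 1)%N.
have ek : k = (2 * n).+1 by rewrite /k addn1.
split.
- set C := pd_minus P (L ^+ k); set B := pd_plus P (L ^+ k).
  have hB : B = L ^+ k + - C by rewrite /B /C -{2}(pd_plus_minus P (L ^+ k)) addrK.
  have hdPhi : dt P n Phi * Phi^-1 = - C by rewrite fPhi mulrK.
  have hdPhih : dt P n Phih * Phih^-1 = B + - (if n == 0%N then Lh^-1 else 0).
    by rewrite fPhih mulrK.
  have dcT := @dconj A (dt P n) (dt_mul P n).
  apply: nc_der; [exact: (dt_add P n)|exact: (dt_mul P n)|exact: (dt_scale P n)| | | |].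
  + rewrite /L /laxL dcT //.
    rewrite hdPhi dt_D mulr0 mul0r addr0 hB opcommDc //.
    exact: commr_sym (commrX _ (commr_refl _)).
  + rewrite {1}hLhi dcT //.
    rewrite hdPhih dt_D mulr0 mul0r addr0 -hLhi opcommDl [opcomm (- _) _]opcomm_c ?addr0 //.
    case: (n == 0%N); last by rewrite oppr0; exact: commr_sym (commr0 _).
    exact: commr_sym (commrN (commr_refl _)).
  + rewrite /osM dcT //.
    rewrite hdPhi hGt hB opcommDl addrC; congr (_ + _).
    rewrite /L /laxL conjX // conj_opcomm // ek (@comm_pow _ _ _ _ hD (commr1 _)) mulr1.
    by rewrite -ek.
  + rewrite /osMh dcT //.
    rewrite hdPhih hGht opcommDl.
    case: eqP => [n0|_]; last by rewrite oppr0 opcomm0l mulr0 mul0r !addr0.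
    rewrite opcommNl hLhi conj_opcomm // hDh mulr1 mulrV //.
    by rewrite subrK.
- set C := pd_minus P (Lh ^+ k); set E := pd_plus P (Lh ^+ k).
  have hE : E = Lh ^+ k + - C by rewrite /E /C -{2}(pd_plus_minus P (Lh ^+ k)) addrK.
  have hdPhi : dth P n Phi * Phi^-1 = - C by rewrite fhPhi mulrK.
  have hdPhih : dth P n Phih * Phih^-1 = E by rewrite fhPhih mulrK.
  have dcT := @dconj A (dth P n) (dth_mul P n).
  apply: nc_der; [exact: (dth_add P n)|exact: (dth_mul P n)|exact: (dth_scale P n)| | | |].
  + rewrite /L /laxL dcT //.
    by rewrite hdPhi dth_D mulr0 mul0r addr0.
  + rewrite {1}hLhi dcT //.
    rewrite hdPhih dth_D mulr0 mul0r addr0 -hLhi hE opcommDc //.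
    exact: commrV (commr_sym (commrX _ (commr_refl _))).
  + rewrite /osM dcT //.
    by rewrite hdPhi hGth mulr0 mul0r addr0.
  + rewrite /osMh dcT //.
    rewrite hdPhih hGhth hE opcommDl.
    have hc : GRing.comm (Dop P)^-1 (- ((Dop P)^-1 * (Dop P)^-1)).
      exact: commrN (commrM (commr_refl _) (commr_refl _)).
    rewrite /Lh /laxLh conjX // conj_opcomm // ek (@comm_pow _ _ _ _ (@opcommV _ _ _ uD hDh) hc).
    rewrite -ek.
    have eP : (Dop P)^-1 ^+ (2 * n) * ((Dop P)^-1 * (Dop P)^-1) = (Dop P) ^- (2 * n + 2).
      by rewrite -exprVn addn2 !exprSr !mulrA.
    rewrite /k mulrN eP !mulrN mulNr addrAC addNr add0r.
    by [].
Qed.
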